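(* Let $G=(V,E)$ be a control flow graph and $p\in V$ a predicate node. For each maximal path from $p$ in $G$ there exists a maximal path from $p$ in $A_p$ with the same order of the first occurrences of all nodes from $V_p$, and vice versa (for each maximal path from $p$ in $A_p$ there exists a maximal path from $p$ in $G$ with the same order of the first occurrences of all nodes from $V_p$).
   Context: A control flow graph (CFG) is a finite directed graph $G=(V,E)$ in which every node has at most two outgoing edges; nodes with exactly two outgoing edges are predicate nodes. A path from $n_1$ is a nonempty finite or infinite sequence $n_1n_2\ldots$ of nodes with each adjacent pair an edge; it is maximal if it is infinite or its last node has no successor. For a node $p$, $V_p$ is the set of nodes occurring on all maximal paths from $p$ in $G$ (so $p\in V_p$). For $V'\subseteq V$, a $V'$-interval from $x$ to $y$ is a finite path $n_1\ldots n_k$ in $G$ with $k\ge 2$, $n_1=x\in V'$, $n_k=y\in V'$, and $n_i\notin V'$ for all $1<i<k$. $A_p$ is the directed graph with node set $V_p$ and an edge $(x,y)$ iff there is a $V_p$-interval from $x$ to $y$ in $G$. Paths and maximal paths in $A_p$ are defined as in $G$. *)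

(* Defs.v *)
From mathcomp Require Import all_boot.
Set Implicit Arguments. Unset Strict Implicit. Unset Printing Implicit Defensive.

(* A (finite or infinite) path is represented by a function [f : nat -> V]
   together with a length [len : option nat]:
   - [len = None]   : the infinite path f 0, f 1, f 2, ...
   - [len = Some n] : the finite path f 0, ..., f (n-1) (requires n >= 1);
     values of f beyond index n-1 are irrelevant. *)

Section Paths.
Variable V : Type.
Variable R : V -> V -> Prop.

Definition in_range (len : option nat) (i : nat) : Prop :=
  match len with None => True | Some n => i < n end.

Definition is_path (f : nat -> V) (len : option nat) : Prop :=
  match len with
  | None => forall i, R (f i) (f i.+1)
  | Some n => 0 < n /\ forall i, i.+1 < n -> R (f i) (f i.+1)
  end.

Definition is_maximal_path (f : nat -> V) (len : option nat) : Prop :=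
  is_path f len /\
  match len with
  | None => True
  | Some n => forall y, ~ R (f n.-1) y
  end.

Definition maximal_path_from (x : V) (f : nat -> V) (len : option nat) : Prop :=
  is_maximal_path f len /\ f 0 = x.

End Paths.

Definition first_occ (V : Type) (f : nat -> V) (len : option nat) (x : V) (i : nat) :=
  in_range len i /\ f i = x /\ forall j, j < i -> f j <> x.

Definition same_first_occ_order (V : Type) (S : V -> Prop)
  (f : nat -> V) (lf : option nat) (g : nat -> V) (lg : option nat) : Prop :=
  (forall x, S x -> ((exists i, first_occ f lf x i) <-> (exists i, first_occ g lg x i))) /\
  (forall x y, S x -> S y ->
     ((exists i j, first_occ f lf x i /\ first_occ f lf y j /\ i < j) <->
      (exists i j, first_occ g lg x i /\ first_occ g lg y j /\ i < j))).

Section CFG.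
Variable V : finType.
Variable E : rel V.

Definition is_CFG : Prop := forall x : V, #|[set y | E x y]| <= 2.

Definition predicate_node (p : V) : Prop := #|[set y | E p y]| = 2.

Definition Vp (p : V) (x : V) : Prop :=
  forall f len, maximal_path_from (fun a b => E a b) p f len ->
    exists i, in_range len i /\ f i = x.

Definition interval (V' : V -> Prop) (x y : V) : Prop :=
  V' x /\ V' y /\
  exists (k : nat) (g : nat -> V),
    2 <= k /\ is_path (fun a b => E a b) g (Some k) /\ g 0 = x /\ g k.-1 = y /\
    (forall i, 0 < i -> i < k.-1 -> ~ V' (g i)).

(* edge relation of A_p; its node set is V_p (every edge joins V_p nodes,
   and paths from p in A_p stay inside V_p) *)
Definition Ap_edge (p : V) (x y : V) : Prop :=
  Vp p x /\ Vp p y /\ interval (Vp p) x y.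

End CFG.

(* Main.v *)
Require Import Defs.
From mathcomp Require Import all_boot.
From mathcomp Require Import zify.
From Stdlib Require Import Classical ClassicalEpsilon.

Set Implicit Arguments. Unset Strict Implicit.

Lemma least_ex (P : nat -> Prop) : (exists n, P n) -> exists n, P n /\ forall m, m < n -> ~ P m.
Proof.
move=> [n0 Pn0].
suff H : forall N n, n <= N -> P n -> exists n, P n /\ forall m, m < n -> ~ P m by exact: (H n0 n0).
elim=> [|N IH] n hn Pn.
- exists n; split=> // m hm; lia.
- case: (classic (exists m, m < n /\ P m)) => [[m [hm Pm]]|hno].
  + apply: (IH m) => //; lia.
  + exists n; split=> // m hm Pm; apply: hno; exists m; done.
Qed.

Lemma in_range_le l i j : j <= i -> in_range l i -> in_range l j.
Proof. case: l => [n|] //= hji hin; lia. Qed.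

Section Gen.
Variable V : Type.
Variable R : V -> V -> Prop.

Lemma path_step f l k : is_path R f l -> in_range l k.+1 -> R (f k) (f k.+1).
Proof. case: l => [n|] /=; [case=> _ H; exact: H | move=> H _; exact: H]. Qed.

Lemma path_in0 f l : is_path R f l -> in_range l 0.
Proof. by case: l => [n [? _]|]. Qed.

Lemma path_of_step f l : in_range l 0 -> (forall k, in_range l k.+1 -> R (f k) (f k.+1)) -> is_path R f l.
Proof. case: l => [n|] /= h0 H; [by split | move=> i; exact: (H i I)]. Qed.

Lemma exists_max_path x : exists f l, maximal_path_from R x f l.
Proof.
have Hn : forall y, exists z, (exists w, R y w) -> R y z.
  move=> y; case: (classic (exists w, R y w)) => [[w Hw]|hno]; [by exists w | by exists y].
pose nx y := proj1_sig (constructive_indefinite_description _ (Hn y)).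
have Hnx : forall y, (exists w, R y w) -> R y (nx y) := fun y => proj2_sig (constructive_indefinite_description _ (Hn y)).
pose f n := iter n nx x.
case: (classic (exists n, ~ exists w, R (f n) w)) => [hex|hall].
- have [n [hn hmin]] := least_ex hex.
  exists f, (Some n.+1); split=> //; split.
  + split=> // i hi. apply: Hnx. apply: NNPP. apply: hmin. lia.
  + move=> y hy /=. apply: hn. by exists y.
- exists f, None; split=> //; split=> // i. apply: Hnx. apply: NNPP => h. apply: hall. by exists i.
Qed.

Definition cpath (a : nat -> V) (n : nat) (b : nat -> V) i := if i < n.-1 then a i else b (i - n.-1).
Definition cat_len n (lb : option nat) := match lb with None => None | Some m => Some (n.-1 + m) end.

Lemma cat_val_lt a n b i : 0 < n -> b 0 = a n.-1 -> i < n -> cpath a n b i = a i.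
Proof.
move=> hn hb hi; rewrite /cpath; case: ltnP => // h.
have -> : i = n.-1 by lia.
by rewrite subnn.
Qed.

Lemma cat_val_ge a n b i : n.-1 <= i -> cpath a n b i = b (i - n.-1).
Proof. by move=> h; rewrite /cpath ltnNge h. Qed.

Lemma cat_range_lt n lb i : in_range lb 0 -> i < n -> in_range (cat_len n lb) i.
Proof. case: lb => [m|] //= h0 hi; lia. Qed.

Lemma cat_range_ge n lb i : n.-1 <= i -> in_range (cat_len n lb) i -> in_range lb (i - n.-1).
Proof. case: lb => [m|] //= h0 hi; lia. Qed.

Lemma cat_maximal a n b lb : is_path R a (Some n) -> is_maximal_path R b lb -> b 0 = a n.-1 ->
  is_maximal_path R (cpath a n b) (cat_len n lb).
Proof.
move=> ha [hb hmax] hb0.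
have hn : 0 < n by case: ha.
split.
- apply: path_of_step; first by apply: cat_range_lt => //; exact: path_in0 hb.
  move=> k hk.
  case: (ltnP k n.-1) => hkn.
  + rewrite !(cat_val_lt hn hb0); try lia.
    apply: (path_step ha) => /=; lia.
  + rewrite !cat_val_ge; try lia.
    have -> : k.+1 - n.-1 = (k - n.-1).+1 by lia.
    apply: (path_step hb).
    have := cat_range_ge (i := k.+1) _ hk. have -> : k.+1 - n.-1 = (k - n.-1).+1 by lia.
    apply; lia.
- case: lb hb hmax => [m|] // hb hmax /=.
  have hm : 0 < m by case: hb.
  rewrite cat_val_ge; last by lia.
  have -> : (n.-1 + m).-1 - n.-1 = m.-1 by lia.
  exact: hmax.
Qed.

Lemma first_occ_ex (f : nat -> V) l x i : in_range l i -> f i = x -> exists j, first_occ f l x j.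
Proof.
move=> hi hx.
have [j [[hj hjx] hmin]] := least_ex (P := fun j => in_range l j /\ f j = x) (ex_intro _ i (conj hi hx)).
exists j; split=> //; split=> // k hk hkx; apply: (hmin k hk); split=> //.
exact: in_range_le (ltnW hk) hj.
Qed.

Lemma first_occ_uniq f l x i i' : @first_occ V f l x i -> first_occ f l x i' -> i = i'.
Proof.
move=> [hi [hx hm]] [hi' [hx' hm']].
case: (ltngtP i i') => [h|h|->] //; [by case: (hm' _ h hx) | by case: (hm _ h hx')].
Qed.

Lemma sfo_sym S f lf g lg : @same_first_occ_order V S f lf g lg -> same_first_occ_order S g lg f lf.
Proof. move=> [H1 H2]; split=> [x hx|x y hx hy]; [exact: iff_sym (H1 x hx) | exact: iff_sym (H2 x y hx hy)]. Qed.

Lemma sfo_trans S f lf g lg h lh : @same_first_occ_order V S f lf g lg -> same_first_occ_order S g lg h lh ->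
  same_first_occ_order S f lf h lh.
Proof.
move=> [H1 H2] [H3 H4]; split=> [x hx|x y hx hy];
[exact: iff_trans (H1 x hx) (H3 x hx) | exact: iff_trans (H2 x y hx hy) (H4 x y hx hy)].
Qed.

Lemma sfo_mono (S : V -> Prop) f lf g lg (h : nat -> nat) :
  (forall k, in_range lg k -> in_range lf (h k) /\ f (h k) = g k) ->
  (forall k k', in_range lg k' -> k < k' -> h k < h k') ->
  (forall i, in_range lf i -> S (f i) -> exists k, in_range lg k /\ g k = f i /\ h k <= i) ->
  same_first_occ_order S g lg f lf.
Proof.
move=> Hh Hmono HC.
have mono_le : forall k k', in_range lg k' -> k <= k' -> h k <= h k'.
  move=> k k' hk'; rewrite leq_eqVlt => /orP [/eqP -> //| hlt]; exact/ltnW/Hmono.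
have S1 : forall x k, S x -> first_occ g lg x k -> first_occ f lf x (h k).
  move=> x k hS [hk [hgx hmin]]; have [hr hf] := Hh k hk.
  split=> //; split; first by rewrite hf.
  move=> j hj hfj.
  have hrj : in_range lf j by exact: in_range_le (ltnW hj) hr.
  have [k' [hk' [hgk' hle]]] := HC j hrj (ltac:(by rewrite hfj)).
  case: (ltnP k' k) => hkk.
  - by apply: (hmin k' hkk); rewrite hgk'.
  - have := mono_le _ _ hk' hkk. lia.
have S2 : forall x i, S x -> first_occ f lf x i -> exists k, first_occ g lg x k.
  move=> x i hS [hi [hfx _]]; have [k' [hk' [hgk' _]]] := HC i hi (ltac:(by rewrite hfx)).
  apply: (first_occ_ex hk'); by rewrite hgk'.
split.
- move=> x hx; split=> [[k hk]|[i hi]]; [by exists (h k); exact: S1 | exact: S2 hi].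
- move=> x y hx hy; split.
  + move=> [k [k' [hk [hk' hlt]]]]. exists (h k), (h k'). split; [exact: S1|split; [exact: S1|]].
    apply: Hmono => //. exact: (proj1 hk').
  + move=> [i [j [hi [hj hlt]]]].
    have [k hk] := S2 _ _ hx hi. have [k' hk'] := S2 _ _ hy hj.
    have ei := first_occ_uniq (S1 _ _ hx hk) hi. have ej := first_occ_uniq (S1 _ _ hy hk') hj.
    exists k, k'; split=> //; split=> //.
    case: (ltnP k k') => // hle.
    have := mono_le _ _ (proj1 hk) hle. lia.
Qed.

End Gen.

Fixpoint st (K : nat -> nat) (n : nat) : nat * nat :=
  match n with
  | 0 => (0, 0)
  | n'.+1 => let: (k, j) := st K n' in if j.+2 < K k then (k, j.+1) else (k.+1, 0)
  end.
Fixpoint Pf (K : nat -> nat) (k : nat) : nat :=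
  match k with 0 => 0 | k'.+1 => Pf K k' + (K k').-1 end.

Lemma st_inv K : (forall k, 1 < K k) -> forall n,
  n = Pf K (st K n).1 + (st K n).2 /\ (st K n).2 < (K (st K n).1).-1.
Proof.
move=> HK; elim=> [|n [IH1 IH2]] /=.
- have := HK 0; lia.
- case: (st K n) IH1 IH2 => k j /= IH1 IH2.
  case: ifP => h /=.
  + lia.
  + move/negbT: h; rewrite -leqNgt => h.
    have := HK k.+1; lia.
Qed.

Lemma st_P K : (forall k, 1 < K k) -> forall k j, j < (K k).-1 -> st K (Pf K k + j) = (k, j).
Proof.
move=> HK.
have Hj : forall k, st K (Pf K k) = (k, 0) ->
    forall j, j < (K k).-1 -> st K (Pf K k + j) = (k, j).
  move=> k H0; elim=> [|j IHj] hj; first by rewrite addn0.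
  rewrite addnS /= IHj /=; last lia.
  case: ifP => // h; move/negbT: h; rewrite -leqNgt => h; lia.
have H0 : forall k, st K (Pf K k) = (k, 0).
  elim=> [//|k IH].
  have := HK k => hk.
  have -> : Pf K k.+1 = (Pf K k + ((K k).-1).-1).+1 by rewrite /=; lia.
  rewrite /= Hj //=; last lia.
  case: ifP => // h; lia.
move=> k; exact: Hj.
Qed.

Lemma Pf_lt K k k' : k < k' -> Pf K k + (K k).-1 <= Pf K k'.
Proof.
elim: k' => [//|k' IH]; rewrite ltnS leq_eqVlt => /orP [/eqP ->//=|h] /=.
have := IH h; lia.
Qed.

Lemma Pf_le K k k' : k <= k' -> Pf K k <= Pf K k'.
Proof.
rewrite leq_eqVlt => /orP [/eqP ->//|h]. have := Pf_lt K h; lia.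
Qed.

Lemma Pf_mono K k k' : (forall k, 1 < K k) -> k < k' -> Pf K k < Pf K k'.
Proof. move=> HK h; have := Pf_lt K h; have := HK k; lia. Qed.

Section M.
Variable V : finType.
Variable E : rel V.
Variable p : V.

Lemma Vp_p : Vp E p p.
Proof. move=> f len [hm h0]; exists 0; split => //; exact: path_in0 (proj1 hm). Qed.

Lemma dir1 f lf : maximal_path_from (fun a b => E a b) p f lf -> exists g lg,
  maximal_path_from (Ap_edge E p) p g lg /\ same_first_occ_order (Vp E p) f lf g lg.
Proof.
move=> hf; have [[hfp hfmax] hf0] := hf.
pose R' := fun i j => in_range lf j /\ i < j /\ Vp E p (f j) /\ forall t, i < t -> t < j -> ~ Vp E p (f t).
have [h [lh [[hhp hhmax] hh0]]] := exists_max_path R' 0.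
have Ha : forall k, in_range lh k -> in_range lf (h k) /\ Vp E p (f (h k)).
  elim=> [|k IH] hk.
  - rewrite hh0; split; [exact: path_in0 hfp | rewrite hf0; exact: Vp_p].
  - have [? [? [? _]]] := path_step hhp hk. by split.
have Hmono : forall k k', in_range lh k' -> k < k' -> h k < h k'.
  move=> k; elim=> [|k' IH] // hk' hlt.
  have [_ [hlt' _]] := path_step hhp hk'.
  rewrite ltnS leq_eqVlt in hlt; case/orP: hlt => [/eqP -> //|hlt].
  apply: ltn_trans hlt'; apply: IH => //; exact: in_range_le (leqnSn _) hk'.
have Hc : forall i, in_range lf i -> Vp E p (f i) -> exists k, in_range lh k /\ h k = i.
  move=> i hi hSi.
  suff H : forall d k, in_range lh k -> h k <= i -> i - h k <= d -> exists k, in_range lh k /\ h k = i.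
    have := H i 0 (path_in0 hhp); rewrite hh0 subn0; apply=> //.
  elim=> [|d IH] k hk hle hd.
  - exists k; split=> //; lia.
  - case: (eqVneq (h k) i) => [<-|hne]; first by exists k.
    have hlt : h k < i by lia.
    case: (classic (in_range lh k.+1)) => hk1.
    + have [hr1 [hlt1 [hS1 hbet]]] := path_step hhp hk1.
      have hle1 : h k.+1 <= i.
        rewrite leqNgt; apply/negP => hgt. exact: (hbet i hlt hgt hSi).
      apply: (IH k.+1) => //; lia.
    + exfalso.
      destruct lh as [m|]; last by apply: hk1.
      rewrite /= in hhmax hk hk1.
      have hkm : k = m.-1 by lia.
      have [t [[ht1 [ht2 ht3]] hmin]] := least_ex (P := fun t => h k < t /\ in_range lf t /\ Vp E p (f t))
         (ex_intro _ i (conj hlt (conj hi hSi))).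
      apply: (hhmax t). rewrite -hkm. split=> //; split=> //; split=> // u hu1 hu2 hSu.
      apply: (hmin u hu2); split=> //; split=> //. exact: in_range_le (ltnW hu2) ht2.
have Hd : is_path (Ap_edge E p) (fun k => f (h k)) lh.
  apply: path_of_step; first exact: path_in0 hhp.
  move=> k hk1.
  have hk : in_range lh k by exact: in_range_le (leqnSn _) hk1.
  have [hr1 [hlt1 [hS1 hbet]]] := path_step hhp hk1.
  have [hr hS] := Ha k hk.
  split=> //; split=> //; split=> //; split=> //.
  exists (h k.+1 - h k).+1, (fun n => f (h k + n)).
  split; first lia.
  split.
  - apply: path_of_step => //= n hn.
    rewrite addnS. apply: (path_step hfp). apply: in_range_le hr1. lia.
  - split; first by rewrite addn0.
    split; first by rewrite /= subnKC //; exact: ltnW.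
    move=> n hn1 hn2 /=. apply: hbet; rewrite /= in hn2; lia.
have HC : forall i, in_range lf i -> Vp E p (f i) -> exists k, in_range lh k /\ f (h k) = f i /\ h k <= i.
  move=> i hi hS; have [k [hk <-]] := Hc i hi hS; by exists k.
have Hord : same_first_occ_order (Vp E p) f lf (fun k => f (h k)) lh.
  apply: sfo_sym; apply: (sfo_mono (h := h)) => // k hk; split; [exact: (Ha k hk).1 | by []].
destruct lh as [m|].
- have [b [lb [[hbp hbmax] hb0]]] := exists_max_path (Ap_edge E p) (f (h m.-1)).
  have hm : 0 < m by case: Hd.
  pose g0 := fun k => f (h k).
  exists (cpath g0 m b); exists (cat_len m lb).
  split.
  + split; first by apply: cat_maximal.
    rewrite (cat_val_lt hm hb0 hm) /g0 /= hh0 hf0 //.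
  + apply: sfo_trans Hord _. apply: (sfo_mono (h := id)) => //.
    * move=> k hk; split; [exact: cat_range_lt (path_in0 hbp) hk | exact: cat_val_lt hm hb0 hk].
    * move=> i hi hSi; case: (ltnP i m) => him.
      - exists i; split=> //; split=> //; by rewrite (cat_val_lt hm hb0 him).
      - have [t [ht hft]] := hSi f lf hf.
        have [k [hk hkt]] := Hc t ht (ltac:(by rewrite hft)).
        exists k; split=> //; split; first by rewrite hkt hft.
        rewrite /= in hk; lia.
- exists (fun k => f (h k)), None; split=> //; split=> //.
  by rewrite /= hh0 hf0.
Qed.

Lemma Ap_nodes g lg : maximal_path_from (Ap_edge E p) p g lg -> forall k, in_range lg k -> Vp E p (g k).
Proof.
move=> [[hgp _] hg0]; case=> [|k] hk; first by rewrite hg0; exact: Vp_p.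
exact: (path_step hgp hk).2.1.
Qed.

Lemma dir2 g lg : maximal_path_from (Ap_edge E p) p g lg -> exists f lf,
  maximal_path_from (fun a b => E a b) p f lf /\ same_first_occ_order (Vp E p) g lg f lf.
Proof.
move=> hg; have [[hgp hgmax] hg0] := hg.
have HV := Ap_nodes hg.
pose Q k (Kw : nat * (nat -> V)) := 1 < Kw.1 /\ (in_range lg k.+1 ->
   is_path (fun a b => E a b) Kw.2 (Some Kw.1) /\ Kw.2 0 = g k /\ Kw.2 (Kw.1).-1 = g k.+1 /\
   forall i, 0 < i -> i < (Kw.1).-1 -> ~ Vp E p (Kw.2 i)).
have HQ : forall k, exists Kw, Q k Kw.
  move=> k; case: (classic (in_range lg k.+1)) => hk.
  - have [_ [_ [_ [_ [K [w [hK [hw [hw0 [hw1 hint]]]]]]]]]] := path_step hgp hk.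
    by exists (K, w); split.
  - by exists (2, fun _ => p); split.
pose Kw k := proj1_sig (constructive_indefinite_description _ (HQ k)).
have HKw : forall k, Q k (Kw k) := fun k => proj2_sig (constructive_indefinite_description _ (HQ k)).
pose K k := (Kw k).1. pose w k := (Kw k).2.
have HK : forall k, 1 < K k := fun k => (HKw k).1.
have Hw : forall k, in_range lg k.+1 ->
   is_path (fun a b => E a b) (w k) (Some (K k)) /\ w k 0 = g k /\ w k (K k).-1 = g k.+1 /\
   forall i, 0 < i -> i < (K k).-1 -> ~ Vp E p (w k i) := fun k => (HKw k).2.
clearbody K w.
pose e n := if (st K n).2 == 0 then g (st K n).1 else w (st K n).1 (st K n).2.
have stP0 : forall k, st K (Pf K k) = (k, 0).
  move=> k; rewrite -[Pf K k]addn0; apply: st_P => //; have := HK k; lia.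
have e_P : forall k, e (Pf K k) = g k by move=> k; rewrite /e stP0.
have e_step : forall n, in_range lg (st K n).1.+1 -> E (e n) (e n.+1).
  move=> n; have [hn1 hn2] := st_inv HK n.
  rewrite /e /=. case: (st K n) hn1 hn2 => k j /= hn1 hn2 hk.
  have [hwp [hw0 [hw1 _]]] := Hw k hk.
  have -> : (if j == 0 then g k else w k j) = w k j by case: eqP => // ->.
  case h : (j.+2 < K k) => /=.
  - apply: (path_step hwp) => /=; lia.
  - move/negbT: h; rewrite -leqNgt => h.
    have -> : g k.+1 = w k j.+1 by rewrite -hw1; congr (w k); lia.
    apply: (path_step hwp) => /=; lia.
have Pmono : forall k k', k < k' -> Pf K k < Pf K k' by move=> k k'; exact: Pf_mono.
have Hint : forall i k j, st K i = (k, j) -> in_range lg k.+1 -> 0 < j -> ~ Vp E p (e i).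
  move=> i k j hs hk hj; have [hn1 hn2] := st_inv HK i.
  rewrite /e hs /= ifN; last by rewrite -lt0n.
  rewrite hs /= in hn2.
  exact: (Hw k hk).2.2.2 j hj hn2.
destruct lg as [m|].
- have hm : 0 < m by case: hgp.
  pose N := (Pf K m.-1).+1.
  have ep : is_path (fun a b => E a b) e (Some N).
    apply: path_of_step => //= n hn.
    apply: e_step => /=.
    have [hn1 hn2] := st_inv HK n.
    case: (ltnP (st K n).1 m.-1) => hk; first lia.
    have := Pf_le K hk; lia.
  have [b [lb [[hbp hbmax] hb0]]] := exists_max_path (fun a b => E a b) (g m.-1).
  have hb0' : b 0 = e N.-1 by rewrite /N /= e_P.
  have hN : 0 < N by [].
  exists (cpath e N b); exists (cat_len N lb).
  split.
  + split; first by apply: cat_maximal.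
    by rewrite (cat_val_lt hN hb0' hN) -[0]/(Pf K 0) e_P.
  + apply: (sfo_mono (h := Pf K)).
    * move=> k /= hk.
      have hkN : Pf K k < N by rewrite /N ltnS; apply: Pf_le; lia.
      split; first exact: cat_range_lt (path_in0 hbp) hkN.
      by rewrite (cat_val_lt hN hb0' hkN) e_P.
    * move=> k k' _; exact: Pmono.
    * move=> i hi hSi; case: (ltnP i N) => hiN.
      -- rewrite (cat_val_lt hN hb0' hiN) in hSi *.
         have [hn1 hn2] := st_inv HK i.
         case hs : (st K i) => [k j]; rewrite hs /= in hn1 hn2.
         case: (posnP j) => hj.
         ++ exists k; split.
            ** rewrite /=; case: (ltnP k m) => // hkm.
               have := Pf_lt K (k := m.-1) (k' := k) ltac:(lia); have := HK m.-1; rewrite /N in hiN; lia.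
            ** split; last lia.
               by rewrite /e hs /= hj.
         ++ exfalso; apply: (Hint i k j hs) => //=.
            case: (ltnP k m.-1) => hkm; first lia.
            have := Pf_le K hkm; rewrite /N in hiN; lia.
      -- exfalso.
         rewrite cat_val_ge in hSi; last lia.
         have hNi : N.-1 <= i by rewrite /N /=; lia.
         have ht := cat_range_ge hNi hi.
         have ht0 : 0 < i - N.-1 by move: hiN; rewrite /N /=; lia.
         have [t [[ht1 [ht2 ht3]] hmin]] := least_ex (P := fun t => 0 < t /\ in_range lb t /\ Vp E p (b t))
           (ex_intro _ (i - N.-1) (conj ht0 (conj ht hSi))).
         apply: (hgmax (b t)).
         split; first by apply: HV => /=; lia.
         split => //; split; first by apply: HV => /=; lia.
         split => //; exists t.+1, b.
         split; first lia.
         split.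
         ++ apply: path_of_step => //= n hn.
            apply: (path_step hbp).
            have hnt : n.+1 <= t by rewrite /= in hn; lia.
            exact: in_range_le hnt ht2.
         ++ split => //; split => // n hn1 hn2 hSn.
            apply: (hmin n hn2); split => //; split => //.
            exact: in_range_le (ltnW hn2) ht2.
- exists e, None; split.
  + split; last by rewrite -[0]/(Pf K 0) e_P.
    split=> // n; exact: e_step.
  + apply: (sfo_mono (h := Pf K)).
    * by move=> k _; split => //; rewrite e_P.
    * move=> k k' _; exact: Pmono.
    * move=> i _ hSi.
      have [hn1 hn2] := st_inv HK i.
      case hs : (st K i) => [k j]; rewrite hs /= in hn1 hn2.
      case: (posnP j) => hj.
      -- exists k; split => //; split; last lia.
         by rewrite /e hs /= hj.
      -- by case: (Hint i k j hs).
Qed.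

End M.

Theorem lemma4p4 (V : finType) (E : rel V) (p : V) :
  is_CFG E -> predicate_node E p ->
  (forall (f : nat -> V) (lf : option nat),
     maximal_path_from (fun a b => E a b) p f lf ->
     exists (g : nat -> V) (lg : option nat),
       maximal_path_from (Ap_edge E p) p g lg /\
       same_first_occ_order (Vp E p) f lf g lg) /\
  (forall (g : nat -> V) (lg : option nat),
     maximal_path_from (Ap_edge E p) p g lg ->
     exists (f : nat -> V) (lf : option nat),
       maximal_path_from (fun a b => E a b) p f lf /\
       same_first_occ_order (Vp E p) g lg f lf).
Proof. move=> _ _; split; [exact: dir1 | exact: dir2]. Qed.
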